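(* Let $\mathcal{T}$ be a $\Sigma_1$-theory such that for every $n\in\mathbb{N}$ there exists a $\mathcal{T}$-interpretation $\mathcal{A}$ with $n<|\sigma^{\mathcal{A}}|<\omega$. Then $\mathcal{T}$ has the finite model property with respect to $\{\sigma\}$.
   Context: $\Sigma_1$ is the empty signature (no function symbols, only equality, interpreted as identity) with one sort $\sigma$. A $\Sigma_1$-interpretation is a structure (nonempty domain $\sigma^{\mathcal{A}}$) plus values for variables; a $\Sigma_1$-theory $\mathcal{T}$ is the class of all $\Sigma_1$-interpretations satisfying a given set of closed formulas (the $\mathcal{T}$-interpretations). $\mathcal{T}$ has the finite model property w.r.t. $\{\sigma\}$ if every quantifier-free formula satisfied by some $\mathcal{T}$-interpretation is satisfied by some $\mathcal{T}$-interpretation $\mathcal{A}$ with $\sigma^{\mathcal{A}}$ finite. *)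

(* Defs.v *)
(* first-order logic over the empty one-sorted signature
   Sigma_1 (only equality, interpreted as identity). *)
From Stdlib Require Import Arith List.
Import ListNotations.

Inductive formula : Type :=
| FEq     : nat -> nat -> formula
| FTrue   : formula
| FFalse  : formula
| FNot    : formula -> formula
| FAnd    : formula -> formula -> formula
| FOr     : formula -> formula -> formula
| FImp    : formula -> formula -> formula
| FForall : nat -> formula -> formula
| FExists : nat -> formula -> formula.

Fixpoint free_in (x : nat) (phi : formula) : Prop :=
  match phi with
  | FEq i j => x = i \/ x = j
  | FTrue | FFalse => False
  | FNot p => free_in x p
  | FAnd p q | FOr p q | FImp p q => free_in x p \/ free_in x q
  | FForall y p | FExists y p => x <> y /\ free_in x p
  end.

Definition closed (phi : formula) : Prop := forall x, ~ free_in x phi.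

Fixpoint qfree (phi : formula) : Prop :=
  match phi with
  | FEq _ _ | FTrue | FFalse => True
  | FNot p => qfree p
  | FAnd p q | FOr p q | FImp p q => qfree p /\ qfree q
  | FForall _ _ | FExists _ _ => False
  end.

(* A Sigma_1-interpretation: a domain sigma^A (nonempty, witnessed by the
   valuation) together with values for all variables. *)
Record interp : Type := Interp { dom : Type; val : nat -> dom }.

Definition upd {D : Type} (v : nat -> D) (x : nat) (d : D) : nat -> D :=
  fun y => if Nat.eqb y x then d else v y.

Fixpoint sat {D : Type} (v : nat -> D) (phi : formula) : Prop :=
  match phi with
  | FEq i j => v i = v j
  | FTrue => True
  | FFalse => False
  | FNot p => ~ sat v p
  | FAnd p q => sat v p /\ sat v q
  | FOr p q => sat v p \/ sat v q
  | FImp p q => sat v p -> sat v q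
  | FForall x p => forall d : D, sat (upd v x d) p
  | FExists x p => exists d : D, sat (upd v x d) p
  end.

Definition satisfies (A : interp) (phi : formula) : Prop := sat (val A) phi.

(* A theory is given by a set Ax of closed formulas; its T-interpretations
   are the interpretations satisfying every axiom. *)
Definition T_interp (Ax : formula -> Prop) (A : interp) : Prop :=
  forall phi, Ax phi -> satisfies A phi.

Definition finite_dom (A : interp) : Prop :=
  exists l : list (dom A), forall d : dom A, In d l.

Definition card_gt (A : interp) (n : nat) : Prop :=
  exists l : list (dom A), NoDup l /\ n < length l.

Definition finite_model_property (Ax : formula -> Prop) : Prop :=
  forall phi, qfree phi ->
    (exists A, T_interp Ax A /\ satisfies A phi) ->
    exists A, T_interp Ax A /\ finite_dom A /\ satisfies A phi.

(* Main.v *)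
Require Import Defs.
From Stdlib Require Import Arith List Lia Classical.
Import ListNotations.

Lemma agree_sat {D : Type} (phi : formula) : forall (v w : nat -> D),
  (forall x, free_in x phi -> v x = w x) -> (sat v phi <-> sat w phi).
Proof.
  induction phi; intros v w H; simpl in *.
  - rewrite (H n (or_introl eq_refl)), (H n0 (or_intror eq_refl)); tauto.
  - tauto.
  - tauto.
  - rewrite (IHphi v w H); tauto.
  - rewrite (IHphi1 v w), (IHphi2 v w); auto; tauto.
  - rewrite (IHphi1 v w), (IHphi2 v w); auto; tauto.
  - rewrite (IHphi1 v w), (IHphi2 v w); auto; tauto.
  - assert (Hd : forall d, sat (upd v n d) phi <-> sat (upd w n d) phi).
    { intro d; apply IHphi; intros x Hx; unfold upd.
      destruct (Nat.eqb_spec x n); auto. }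
    split; intros Hs d; apply Hd; auto.
  - assert (Hd : forall d, sat (upd v n d) phi <-> sat (upd w n d) phi).
    { intro d; apply IHphi; intros x Hx; unfold upd.
      destruct (Nat.eqb_spec x n); auto. }
    split; intros [d Hs]; exists d; apply Hd; auto.
Qed.

Fixpoint mv (phi : formula) : nat :=
  match phi with
  | FEq i j => max i j
  | FTrue | FFalse => 0
  | FNot p => mv p
  | FAnd p q | FOr p q | FImp p q => max (mv p) (mv q)
  | FForall _ p | FExists _ p => mv p
  end.

Lemma qf_sat {D E : Type} (phi : formula) (v : nat -> D) (w : nat -> E) :
  qfree phi ->
  (forall i j, i <= mv phi -> j <= mv phi -> (v i = v j <-> w i = w j)) ->
  (sat v phi <-> sat w phi).
Proof.
  induction phi; simpl; intros Hq H; try tauto;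
  try (apply H; lia);
  repeat match goal with
  | Hq : _ /\ _ |- _ => destruct Hq
  | IH : qfree ?p -> _ -> (sat v ?p <-> sat w ?p) |- _ =>
      rewrite IH by (auto; intros; apply H; lia); clear IH
  end; tauto.
Qed.

Lemma build {D E : Type} (v : nat -> D) (l : list E) (e0 : E) :
  NoDup l -> forall k, k <= length l ->
  exists w : nat -> E, forall i j, i < k -> j < k -> (v i = v j <-> w i = w j).
Proof.
  intros Hnd k; induction k as [|k IH]; intros Hk.
  - exists (fun _ => e0); intros; lia.
  - destruct (IH ltac:(lia)) as [w Hw].
    destruct (classic (exists j, j < k /\ v j = v k)) as [[j [Hj Hvj]]|Hno].
    + exists (upd w k (w j)); intros a b Ha Hb; unfold upd.
      destruct (Nat.eqb_spec a k), (Nat.eqb_spec b k); subst.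
      * tauto.
      * rewrite <- Hvj; rewrite (Hw j b) by lia; split; auto.
      * rewrite <- Hvj; rewrite (Hw a j) by lia; split; auto.
      * apply Hw; lia.
    + assert (Hex : exists x, In x l /\ ~ In x (map w (seq 0 k))).
      { apply NNPP; intro Hc.
        assert (incl l (map w (seq 0 k))).
        { intros x Hx; apply NNPP; intro Hn; apply Hc; eauto. }
        pose proof (NoDup_incl_length Hnd H).
        rewrite length_map, length_seq in H0; lia. }
      destruct Hex as [x [_ Hx]].
      exists (upd w k x); intros a b Ha Hb; unfold upd.
      assert (Hnot : forall c, c < k -> w c <> x).
      { intros c Hc Heq; apply Hx; subst x; apply in_map, in_seq; lia. }
      destruct (Nat.eqb_spec a k), (Nat.eqb_spec b k); subst.
      * tauto.
      * split; intro Heq.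
        -- exfalso; apply Hno; exists b; split; [lia|auto].
        -- exfalso; apply (Hnot b); [lia|auto].
      * split; intro Heq.
        -- exfalso; apply Hno; exists a; split; [lia|auto].
        -- exfalso; apply (Hnot a); [lia|auto].
      * apply Hw; lia.
Qed.

Theorem lemma51 (Ax : formula -> Prop)
  (Hclosed : forall phi, Ax phi -> closed phi) :
  (forall n : nat, exists A : interp,
      T_interp Ax A /\ card_gt A n /\ finite_dom A) ->
  finite_model_property Ax.
Proof.
  intros Hn phi Hq [A [HTA HsA]].
  destruct (Hn (mv phi)) as [B [HTB [[l [Hnd Hlen]] Hfin]]].
  destruct (build (val A) l (val B 0) Hnd (S (mv phi)) ltac:(lia)) as [w Hw].
  exists (Interp (dom B) w); split; [|split].
  - intros ax Hax; unfold satisfies; simpl.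
    apply (agree_sat ax (val B) w).
    + intros x Hx; exfalso; exact (Hclosed ax Hax x Hx).
    + apply HTB; auto.
  - exact Hfin.
  - unfold satisfies; simpl.
    apply (proj1 (qf_sat phi (val A) w Hq (fun i j Hi Hj => Hw i j ltac:(lia) ltac:(lia)))).
    exact HsA.
Qed.
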